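(* If a graph $G$ has a min-max clique covering that satisfies simple intersection, then the compressed cliques graph of $G$ is unique up to isomorphism; that is, the compressed cliques graphs of $G$ constructed from any two min-max clique coverings of $G$ satisfying simple intersection are isomorphic.
   Context: A clique covering of $G$ is a set of cliques such that every edge lies in at least one of them; $\operatorname{cc}(G)$ is the minimum size of one. A min-max clique covering is a clique covering of size $\operatorname{cc}(G)$ consisting of maximal cliques. It has simple intersection if no three distinct cliques of it have a common vertex. Given such a covering $\{C_1,\dots,C_\ell\}$, for distinct $i,j$ put $C_{i,j}=C_i\cap C_j$ and $C_{i,i}=C_i\setminus\bigcup_{j\ne i}C_j$. The compressed cliques graph with respect to this covering has one vertex $v_{i,j}$ for each non-empty set $C_{i,j}$ (including $i=j$), and $v_{i,j}$, $v_{i',j'}$ are adjacent iff $\{i,j\}\cap\{i',j'\}\neq\emptyset$. *)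

(* Defs.v *)
(* A simple graph is a symmetric irreflexive relation e on a finType T. *)
From mathcomp Require Import all_boot.
Set Implicit Arguments. Unset Strict Implicit. Unset Printing Implicit Defensive.

Section Graphs.
Variables (T : finType) (e : rel T).

Definition is_clique (A : {set T}) : Prop :=
  forall x y, x \in A -> y \in A -> x != y -> e x y.

Definition is_maximal_clique (A : {set T}) : Prop :=
  is_clique A /\ forall B : {set T}, is_clique B -> A \subset B -> B = A.

Definition is_clique_covering (K : {set {set T}}) : Prop :=
  (forall A, A \in K -> is_clique A) /\
  (forall x y, e x y -> exists2 A, A \in K & (x \in A) && (y \in A)).

Definition is_min_max_clique_covering (K : {set {set T}}) : Prop :=
  [/\ is_clique_covering K,
      (forall K' : {set {set T}}, is_clique_covering K' -> #|K| <= #|K'|) &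
      (forall A, A \in K -> is_maximal_clique A)].

Definition simple_intersection (K : {set {set T}}) : Prop :=
  forall A B C, A \in K -> B \in K -> C \in K ->
    A != B -> B != C -> A != C -> A :&: B :&: C = set0.

Definition Cpart (K : {set {set T}}) (A B : {set T}) : {set T} :=
  if A == B then A :\: \bigcup_(D in K | D != A) D else A :&: B.

(* Vertices of the compressed cliques graph: the unordered index pairs {A,B}
   (with A = B allowed, giving the singleton {A}) such that C_{A,B} is nonempty. *)
Definition ccg_vertices (K : {set {set T}}) : {set {set {set T}}} :=
  [set p | [exists A in K, exists B in K,
              (p == [set A; B]) && (Cpart K A B != set0)]].

Definition ccg_adj (p q : {set {set T}}) : bool :=
  (p != q) && (p :&: q != set0).

Definition ccg_isomorphic (K1 K2 : {set {set T}}) : Prop :=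
  exists f : {set {set T}} -> {set {set T}},
    [/\ {in ccg_vertices K1 &, injective f},
        f @: ccg_vertices K1 = ccg_vertices K2 &
        {in ccg_vertices K1 &, forall p q, ccg_adj (f p) (f q) = ccg_adj p q}].

End Graphs.

(* Main.v *)
Require Import Defs.
From mathcomp Require Import all_boot.
Set Implicit Arguments. Unset Strict Implicit. Unset Printing Implicit Defensive.

Definition cls (T : finType) (K : {set {set T}}) (x : T) : {set {set T}} :=
  [set A in K | x \in A].

Lemma in_cls (T : finType) (K : {set {set T}}) x A :
  (A \in cls K x) = (A \in K) && (x \in A).
Proof. by rewrite inE. Qed.

Lemma no_merge (T : finType) (e : rel T) (K : {set {set T}}) A C D :
  is_min_max_clique_covering e K -> A \in K -> C \in K -> D \in K -> A != C ->
  A \subset D :|: C -> C \subset A :|: D -> False.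
Proof.
move=> [[Kcl Kcov] Kmin _] AK CK DK nAC sA sC.
have cA := Kcl A AK; have cC := Kcl C CK; have cD := Kcl D DK.
set K' := (A :|: C) |: ((K :\ A) :\ C).
have cov : is_clique_covering e K'.
  split.
  - move=> B; rewrite !inE => /orP[/eqP ->|/andP[_ /andP[_ BK]]]; last exact: Kcl.
    move=> u v; rewrite !inE => /orP[uA|uC] /orP[vA|vC] nuv.
    + exact: cA.
    + have := subsetP sA u uA; rewrite !inE => /orP[uD|uC].
      * have := subsetP sC v vC; rewrite !inE => /orP[vA|vD]; first exact: cA.
        exact: cD.
      * exact: cC.
    + have := subsetP sC u uC; rewrite !inE => /orP[uA|uD]; first exact: cA.
      have := subsetP sA v vA; rewrite !inE => /orP[vD|vC]; first exact: cD.
      exact: cC.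
    + exact: cC.
  - move=> x y exy; have [B BK /andP[xB yB]] := Kcov x y exy.
    case: (eqVneq B A) => [BA|nBA].
      exists (A :|: C); first by rewrite !inE eqxx.
      by rewrite !inE -BA xB yB.
    case: (eqVneq B C) => [BC|nBC].
      exists (A :|: C); first by rewrite !inE eqxx.
      by rewrite !inE -BC xB yB !orbT.
    exists B; last by rewrite xB yB.
    by rewrite !inE nBA nBC BK !orbT.
have := Kmin K' cov.
have c1 : #|K'| <= (#|K :\ A :\ C|).+1.
  by rewrite cardsU1; case: (_ \notin _).
have c2 : #|K| = (#|K :\ A :\ C|).+2.
  rewrite (cardsD1 A K) AK (cardsD1 C (K :\ A)) !inE eq_sym nAC CK.
  by rewrite add1n add1n.
rewrite c2 => h; have := leq_trans h c1; by rewrite ltnn.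
Qed.

Lemma pair_cls (T : finType) (K : {set {set T}}) x A B :
  simple_intersection K -> A \in cls K x -> B \in cls K x -> A != B ->
  cls K x \subset [set A; B].
Proof.
move=> SI; rewrite !inE => /andP[AK xA] /andP[BK xB] nAB.
apply/subsetP => D; rewrite !inE => /andP[DK xD].
case: (eqVneq D A) => //= nDA; case: (eqVneq D B) => //= nDB.
have := SI A B D AK BK DK nAB; rewrite eq_sym nDB eq_sym nDA => /(_ isT isT).
by move/setP/(_ x); rewrite !inE xA xB xD.
Qed.

Lemma covered_nb (T : finType) (e : rel T) (K : {set {set T}}) x :
  irreflexive e -> is_min_max_clique_covering e K ->
  cls K x != set0 -> exists y, e x y.
Proof.
move=> irr [[Kcl Kcov] Kmin Kmax] /set0Pn[A]; rewrite inE => /andP[AK xA].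
case: (pickP [pred y in A | y != x]) => [y /andP[yA nyx]|none].
  by exists y; apply: (Kcl A AK); rewrite // eq_sym.
exfalso.
have cov : is_clique_covering e (K :\ A).
  split; first by move=> B; rewrite !inE => /andP[_]; exact: Kcl.
  move=> u v euv; have [B BK /andP[uB vB]] := Kcov u v euv.
  case: (eqVneq B A) => [BA|nBA]; last by exists B; rewrite ?inE ?nBA ?BK ?uB ?vB.
  have hu : u = x by apply/eqP; apply: contraFT (none u) => h; rewrite /= -BA uB.
  have hv : v = x by apply/eqP; apply: contraFT (none v) => h; rewrite /= -BA vB.
  by move: euv; rewrite hu hv irr.
have := Kmin _ cov; rewrite (cardsD1 A K) AK add1n ltnn //.
Qed.

Lemma nb_covered (T : finType) (e : rel T) (K : {set {set T}}) x y :
  is_clique_covering e K -> e x y -> cls K x != set0.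
Proof.
move=> [_ Kcov] exy; have [A AK /andP[xA _]] := Kcov x y exy.
by apply/set0Pn; exists A; rewrite inE AK xA.
Qed.

Lemma N_cls (T : finType) (e : rel T) (K : {set {set T}}) x z :
  symmetric e -> is_clique_covering e K -> cls K x != set0 ->
  ((z == x) || e x z) = (cls K x :&: cls K z != set0).
Proof.
move=> sym [Kcl Kcov] nx.
case: (eqVneq z x) => [->|nzx] /=; first by rewrite setIid nx.
apply/idP/idP.
  move=> exz; have [A AK /andP[xA zA]] := Kcov x z exz.
  by apply/set0Pn; exists A; rewrite !inE AK xA zA.
case/set0Pn => A; rewrite !inE => /andP[/andP[AK xA] /andP[_ zA]].
by apply: (Kcl A AK); rewrite // eq_sym.
Qed.

Lemma cls_in_V (T : finType) (K : {set {set T}}) x :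
  simple_intersection K -> cls K x != set0 -> cls K x \in ccg_vertices K.
Proof.
move=> SI /set0Pn[A Ax].
case: (pickP [pred B in cls K x | B != A]) => [B /andP[Bx nBA]|none].
  have sub : cls K x \subset [set A; B] by apply: pair_cls; rewrite // eq_sym.
  move: Ax Bx; rewrite !inE => /andP[AK xA] /andP[BK xB].
  apply/existsP; exists A; rewrite AK /=; apply/existsP; exists B; rewrite BK /=.
  rewrite /Cpart (eq_sym A B) (negbTE nBA).
  apply/andP; split; last by apply/set0Pn; exists x; rewrite inE xA xB.
  rewrite eqEsubset sub /=; apply/subsetP => D; rewrite !inE.
  by case/orP => /eqP ->; rewrite ?AK ?xA ?BK ?xB.
have eqA : cls K x = [set A].
  apply/setP => D; rewrite inE; case: (eqVneq D A) => [->|nDA]; first by rewrite Ax.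
  by apply/negbTE; apply: contraFN (none D) => h /=; rewrite h nDA.
move: Ax; rewrite inE => /andP[AK xA].
rewrite eqA inE; apply/existsP; exists A; rewrite AK /=; apply/existsP; exists A.
rewrite AK setUid eqxx /= /Cpart eqxx; apply/set0Pn; exists x.
rewrite inE xA andbT; apply/bigcupP => -[D /andP[DK nDA] xD].
by move/setP/(_ D): eqA; rewrite !inE DK xD (negbTE nDA).
Qed.

Lemma V_cls (T : finType) (K : {set {set T}}) p :
  simple_intersection K -> p \in ccg_vertices K -> exists x, cls K x = p.
Proof.
move=> SI; rewrite inE => /existsP[A /andP[AK /existsP[B /andP[BK /andP[/eqP -> ne]]]]].
move: ne; rewrite /Cpart; case: (eqVneq A B) => [<-|nAB] /set0Pn[x].
  rewrite inE => /andP[nbig xA]; exists x; rewrite setUid.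
  apply/setP => D; rewrite !inE; case: (eqVneq D A) => [->|nDA]; first by rewrite AK xA.
  apply/negbTE/negP => /andP[DK xD]; apply: (negP nbig).
  by apply/bigcupP; exists D; rewrite ?inE ?DK ?nDA.
rewrite inE => /andP[xA xB]; exists x.
have Ax : A \in cls K x by rewrite inE AK xA.
have Bx : B \in cls K x by rewrite inE BK xB.
apply/eqP; rewrite eqEsubset (pair_cls SI Ax Bx nAB) /=.
by apply/subsetP => D; rewrite !inE => /orP[] /eqP ->; rewrite ?AK ?xA ?BK ?xB.
Qed.

Lemma max_sub (T : finType) (e : rel T) (A B : {set T}) :
  is_maximal_clique e A -> is_clique e B -> A \subset B -> B = A.
Proof. by move=> [_ h] cB sAB; apply: h. Qed.

Lemma sub_union (T : finType) (K : {set {set T}}) x y A :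
  A \in cls K x -> A \notin cls K y ->
  (forall z, (cls K x :&: cls K z != set0) = (cls K y :&: cls K z != set0)) ->
  forall z, z \in A -> exists2 B, B \in cls K y & z \in B.
Proof.
move=> Ax Ay H z zA.
have : cls K x :&: cls K z != set0.
  apply/set0Pn; exists A; move: Ax; rewrite !inE => /andP[AK xA]; by rewrite AK xA zA.
rewrite H => /set0Pn[B]; rewrite !inE => /andP[/andP[BK yB] /andP[_ zB]].
by exists B; rewrite ?inE ?BK ?yB.
Qed.

Lemma twin_one (T : finType) (e : rel T) (K : {set {set T}}) x y A :
  is_min_max_clique_covering e K -> simple_intersection K ->
  A \in cls K x -> A \notin cls K y -> cls K y != set0 ->
  (forall z, (cls K x :&: cls K z != set0) = (cls K y :&: cls K z != set0)) ->
  False.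
Proof.
move=> KK SI Ax Ay ny H.
have H' : forall z, (cls K y :&: cls K z != set0) = (cls K x :&: cls K z != set0).
  by move=> z; rewrite H.
have [[Kcl _] _ Kmax] := KK.
have AK : A \in K by move: Ax; rewrite inE => /andP[].
have sA := sub_union Ax Ay H.
have : cls K y :&: cls K y != set0 by rewrite setIid.
rewrite -H => /set0Pn[D]; rewrite inE => /andP[Dx Dy].
have DK : D \in K by move: Dx; rewrite inE => /andP[].
have nAD : A != D by apply: contraNneq Ay => ->.
case: (pickP [pred C in cls K y | C != D]) => [C /andP[Cy nCD]|none].
  have CK : C \in K by move: Cy; rewrite inE => /andP[].
  have subx := pair_cls SI Ax Dx nAD.
  have nDC : D != C by rewrite eq_sym.
  have suby := pair_cls SI Dy Cy nDC.
  have nAC : A != C by apply: contraNneq Ay => ->.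
  have Cx : C \notin cls K x.
    apply/negP => /(subsetP subx); rewrite !inE (negbTE nCD) orbF eq_sym.
    by rewrite (negbTE nAC).
  have sC := sub_union Cy Cx H'.
  apply: (no_merge KK AK CK DK nAC).
    apply/subsetP => z zA; have [B By zB] := sA z zA.
    by move: (subsetP suby B By); rewrite !inE => /orP[] /eqP <-; rewrite zB ?orbT.
  apply/subsetP => z zC; have [B Bx zB] := sC z zC.
  by move: (subsetP subx B Bx); rewrite !inE => /orP[] /eqP <-; rewrite zB ?orbT.
have : D = A.
  apply: (max_sub (Kmax A AK) (Kcl D DK)); apply/subsetP => z zA.
  have [B By zB] := sA z zA.
  case: (eqVneq B D) => [<-//|nBD]; by have := none B; rewrite /= By nBD.
by move=> h; move: nAD; rewrite h eqxx.
Qed.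

Lemma twin (T : finType) (e : rel T) (K : {set {set T}}) x y :
  is_min_max_clique_covering e K -> simple_intersection K ->
  cls K x != set0 -> cls K y != set0 ->
  (forall z, (cls K x :&: cls K z != set0) = (cls K y :&: cls K z != set0)) ->
  cls K x = cls K y.
Proof.
move=> KK SI nx ny H.
have H' : forall z, (cls K y :&: cls K z != set0) = (cls K x :&: cls K z != set0).
  by move=> z; rewrite H.
apply/eqP; rewrite eqEsubset; apply/andP; split; apply/subsetP => A Ax;
  apply: contraT => Ay; exfalso.
  exact: (twin_one KK SI Ax Ay ny H).
exact: (twin_one KK SI Ax Ay nx H').
Qed.

Lemma cov_transfer (T : finType) (e : rel T) (K1 K2 : {set {set T}}) x :
  irreflexive e -> is_min_max_clique_covering e K1 -> is_min_max_clique_covering e K2 ->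
  cls K1 x != set0 -> cls K2 x != set0.
Proof.
move=> irr K1K K2K n1; have [z exz] := covered_nb irr K1K n1.
by have [c _ _] := K2K; apply: (nb_covered c exz).
Qed.

Lemma cls_equiv (T : finType) (e : rel T) (K1 K2 : {set {set T}}) x y :
  symmetric e -> irreflexive e ->
  is_min_max_clique_covering e K1 -> simple_intersection K1 ->
  is_min_max_clique_covering e K2 -> simple_intersection K2 ->
  cls K1 x != set0 -> cls K1 y != set0 -> cls K1 x = cls K1 y -> cls K2 x = cls K2 y.
Proof.
move=> sym irr K1K SI1 K2K SI2 nx ny exy.
have nx2 := cov_transfer irr K1K K2K nx.
have ny2 := cov_transfer irr K1K K2K ny.
apply: (twin K2K SI2 nx2 ny2) => z.
have [c1 _ _] := K1K; have [c2 _ _] := K2K.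
by rewrite -(N_cls z sym c2 nx2) -(N_cls z sym c2 ny2) (N_cls z sym c1 nx)
  (N_cls z sym c1 ny) exy.
Qed.

Definition fmap (T : finType) (K1 K2 : {set {set T}}) (p : {set {set T}}) :=
  if [pick x | cls K1 x == p] is Some x then cls K2 x else set0.

Lemma fP (T : finType) (K1 K2 : {set {set T}}) p :
  simple_intersection K1 -> p \in ccg_vertices K1 ->
  exists x, [/\ cls K1 x = p, cls K1 x != set0 & fmap K1 K2 p = cls K2 x].
Proof.
move=> SI pV; rewrite /fmap; case: pickP => [x /eqP hx|none].
  exists x; split => //; move: pV; rewrite hx inE.
  case/existsP => A /andP[_ /existsP[B /andP[_ /andP[/eqP -> _]]]].
  by apply/set0Pn; exists A; rewrite !inE eqxx.
by have [x hx] := V_cls SI pV; have := none x; rewrite /= hx eqxx.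
Qed.

Theorem mainTheorem3 (T : finType) (e : rel T)
    (e_sym : symmetric e) (e_irr : irreflexive e)
    (K1 K2 : {set {set T}}) :
  is_min_max_clique_covering e K1 -> simple_intersection K1 ->
  is_min_max_clique_covering e K2 -> simple_intersection K2 ->
  ccg_isomorphic K1 K2.
Proof.
move=> K1K SI1 K2K SI2.
have eq12 := cls_equiv e_sym e_irr K1K SI1 K2K SI2.
have eq21 := cls_equiv e_sym e_irr K2K SI2 K1K SI1.
have tr := cov_transfer e_irr K1K K2K.
have finj : {in ccg_vertices K1 &, injective (fmap K1 K2)}.
  move=> p q pV qV.
  have [x [hx nx ->]] := fP K2 SI1 pV; have [y [hy ny ->]] := fP K2 SI1 qV.
  by move=> h; rewrite -hx -hy; apply: eq21 => //; apply: tr.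
exists (fmap K1 K2); split => //.
- apply/setP => r; apply/imsetP/idP.
    case=> p pV ->; have [x [_ nx ->]] := fP K2 SI1 pV.
    by apply: cls_in_V => //; apply: tr.
  move=> rV; have [y hy] := V_cls SI2 rV.
  have ny2 : cls K2 y != set0.
    move: rV; rewrite -hy inE.
    case/existsP => A /andP[_ /existsP[B /andP[_ /andP[/eqP -> _]]]].
    by apply/set0Pn; exists A; rewrite !inE eqxx.
  have ny1 := cov_transfer e_irr K2K K1K ny2.
  have pV := cls_in_V SI1 ny1.
  exists (cls K1 y) => //.
  have [x [hx nx ->]] := fP K2 SI1 pV.
  by rewrite -hy; apply: eq12.
- move=> p q pV qV.
  have [c1 _ _] := K1K; have [c2 _ _] := K2K.
  rewrite /ccg_adj (inj_in_eq finj) //.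
  have [x [hx nx ->]] := fP K2 SI1 pV; have [y [hy ny ->]] := fP K2 SI1 qV.
  congr (_ && _).
  by rewrite -(N_cls y e_sym c2 (tr _ nx)) (N_cls y e_sym c1 nx) hx hy.
Qed.
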